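(* Let $f\in C([0,1])$. Then $f\in\mathcal{F}_0$ if and only if there exist real numbers $\alpha_h$, $h\in\mathbf{Z}$, such that $$f(t)=\alpha_0t+\lim_{N\to+\infty}\sum_{1\le|h|\le N}\alpha_h\frac{e(ht)-1}{2i\pi h}\Bigl(1-\frac{|h|}{N}\Bigr)$$ uniformly for $t\in[0,1]$. For $f\in\mathcal{F}_0$, this expansion holds if and only if $\alpha_0=f(1)$ and $\alpha_h=f(1)+2i\pi h\widehat f(h)$ for $h\neq0$, where $\widehat f(h)=\int_0^1f(t)e(-ht)\,dt$. Moreover, for $f\in\mathcal{F}_0$ with these coefficients, $f\in\mathcal{S}$ if and only if $|\alpha_h|\le2$ for all $h\in\mathbf{Z}$.
   Context: $e(z)=e^{2i\pi z}$. $C([0,1])$ is the space of continuous complex-valued functions on $[0,1]$ with the sup norm. $\mathcal{F}_0$ is the real vector space of all $f\in C([0,1])$ such that $f(t)+\overline{f(1-t)}=f(1)$ for all $t\in[0,1]$. $\mathcal{S}$ is the support in $C([0,1])$ of the law of the random series $\mathrm{K}(t)=t\,\mathrm{ST}_0+\sum_{h\neq0}\frac{e(ht)-1}{2\pi i h}\mathrm{ST}_h$, where $(\mathrm{ST}_h)_{h\in\mathbf{Z}}$ are independent with Sato–Tate law $\frac1\pi\sqrt{1-x^2/4}\,dx$ on $[-2,2]$ (almost surely uniformly convergent via symmetric partial sums); equivalently, $\mathcal{S}$ is the set of $f\in C([0,1])$ with $f(0)=0$, $f(1)\in[-2,2]$, and such that $g(t)=f(t)-tf(1)$ has $\widehat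 g(h)\in i\mathbf{R}$ and $|\widehat g(h)|\le1/(\pi|h|)$ for all $h\ne0$. *)

(* Defs.v *)
From Stdlib Require Import Reals ZArith.
From Coquelicot Require Import Coquelicot.

Open Scope R_scope.

Definition e (x : R) : C := (cos (2 * PI * x), sin (2 * PI * x)).

Definition I01 (t : R) : Prop := 0 <= t <= 1.

(* f : R -> C represents an element of C([0,1]); only its values on [0,1] matter. *)
Definition cont01 (f : R -> C) : Prop :=
  forall t, I01 t -> filterlim f (within I01 (locally t)) (locally (f t)).

Definition inF0 (f : R -> C) : Prop :=
  forall t, I01 t -> (f t + Cconj (f (1 - t)%R))%C = f 1.

Definition fhat (f : R -> C) (h : Z) : C :=
  @RInt C_R_CompleteNormedModule (fun t => (f t * e (- IZR h * t))%C) 0 1.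

Definition kterm (alpha : Z -> R) (h : Z) (t : R) : C :=
  (RtoC (alpha h) * ((e (IZR h * t) - RtoC 1) / (RtoC 2 * Ci * RtoC PI * RtoC (IZR h))))%C.

Fixpoint fejer_sum (alpha : Z -> R) (N : nat) (M : nat) (t : R) : C :=
  match M with
  | O => RtoC 0
  | S k => (fejer_sum alpha N k t
            + RtoC (1 - INR (S k) / INR N)
              * (kterm alpha (Z.of_nat (S k)) t + kterm alpha (- Z.of_nat (S k))%Z t))%C
  end.

Definition fejer (alpha : Z -> R) (N : nat) (t : R) : C :=
  (RtoC (alpha 0%Z * t) + fejer_sum alpha N N t)%C.

Definition expansion (f : R -> C) (alpha : Z -> R) : Prop :=
  forall eps : R, 0 < eps -> exists N0 : nat, forall N : nat, (N0 <= N)%nat ->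
    forall t, I01 t -> Cmod (f t - fejer alpha N t)%C < eps.

(* The set S, via the characterization given in the context:
   f(0)=0, f(1) in [-2,2], and g(t) = f(t) - t f(1) has \hat g(h) in iR with
   |\hat g(h)| <= 1/(pi |h|) for h <> 0. *)
Definition inS (f : R -> C) : Prop :=
  cont01 f /\ f 0 = RtoC 0 /\ Im (f 1) = 0 /\ -2 <= Re (f 1) <= 2 /\
  forall h : Z, h <> 0%Z ->
    let g := fun t : R => (f t - RtoC t * f 1)%C in
    Re (fhat g h) = 0 /\ Cmod (fhat g h) <= 1 / (PI * Rabs (IZR h)).

(* Main.v *)
Require Import Defs.
From Stdlib Require Import Reals ZArith Lra Lia.
From Coquelicot Require Import Coquelicot.
Open Scope R_scope.


Lemma cs_nat (n : nat) : cos (2*PI*INR n) = 1 /\ sin (2*PI*INR n) = 0.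
Proof.
  pose proof (cos_period 0 n) as H1. pose proof (sin_period 0 n) as H2.
  rewrite cos_0 in H1. rewrite sin_0 in H2.
  replace (2*PI*INR n) with (0 + 2 * INR n * PI) by ring. tauto.
Qed.

Lemma cs_Z (h : Z) : cos (2*PI*IZR h) = 1 /\ sin (2*PI*IZR h) = 0.
Proof.
  destruct (Z.le_gt_cases 0 h) as [H|H].
  - rewrite <- (Z2Nat.id h H), <- INR_IZR_INZ. apply cs_nat.
  - replace h with (- Z.of_nat (Z.to_nat (- h)))%Z by lia.
    rewrite opp_IZR, <- INR_IZR_INZ.
    replace (2 * PI * - INR (Z.to_nat (- h))) with (- (2 * PI * INR (Z.to_nat (- h)))) by ring.
    rewrite <- cos_sym, sin_antisym. destruct (cs_nat (Z.to_nat (-h))) as [A B]. rewrite A, B. split; lra.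
Qed.

Lemma cos_perZ (h : Z) x : cos (x + 2*PI*IZR h) = cos x.
Proof. rewrite cos_plus. destruct (cs_Z h) as [A B]. rewrite A, B. ring. Qed.
Lemma sin_perZ (h : Z) x : sin (x + 2*PI*IZR h) = sin x.
Proof. rewrite sin_plus. destruct (cs_Z h) as [A B]. rewrite A, B. ring. Qed.
Lemma cos_refZ (h : Z) x : cos (2*PI*IZR h - x) = cos x.
Proof. rewrite cos_minus. destruct (cs_Z h) as [A B]. rewrite A, B. ring. Qed.
Lemma sin_refZ (h : Z) x : sin (2*PI*IZR h - x) = - sin x.
Proof. rewrite sin_minus. destruct (cs_Z h) as [A B]. rewrite A, B. ring. Qed.

Lemma INR_Z (n : nat) : IZR (Z.of_nat n) = INR n.
Proof. now rewrite INR_IZR_INZ. Qed.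

Fixpoint ssum (a : nat -> R) (M : nat) : R :=
  match M with O => 0 | S k => ssum a k + a (S k) end.
Fixpoint lsum (a : nat -> R) (n : nat) : R :=
  match n with O => 0 | S k => lsum a k + a k end.

Lemma ssum_ext a b M : (forall m, (1 <= m <= M)%nat -> a m = b m) -> ssum a M = ssum b M.
Proof.
  induction M; intros H; simpl; auto.
  rewrite IHM by (intros; apply H; lia). rewrite (H (S M)) by lia. auto.
Qed.
Lemma ssum_plus a b M : ssum (fun m => a m + b m) M = ssum a M + ssum b M.
Proof. induction M; simpl; [ring|rewrite IHM; ring]. Qed.
Lemma ssum_minus a b M : ssum (fun m => a m - b m) M = ssum a M - ssum b M.
Proof. induction M; simpl; [ring|rewrite IHM; ring]. Qed.
Lemma ssum_scal c a M : ssum (fun m => c * a m) M = c * ssum a M.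
Proof. induction M; simpl; [ring|rewrite IHM; ring]. Qed.
Lemma ssum_zero M : ssum (fun _ => 0) M = 0.
Proof. induction M; simpl; [ring|rewrite IHM; ring]. Qed.
Lemma lsum_ext a b n : (forall j, (j < n)%nat -> a j = b j) -> lsum a n = lsum b n.
Proof.
  induction n; intros H; simpl; auto.
  rewrite IHn by (intros; apply H; lia). rewrite (H n) by lia. auto.
Qed.
Lemma lsum_peel b n : lsum b (S n) = b O + lsum (fun j => b (S j)) n.
Proof. induction n; simpl in *; [ring|rewrite IHn; ring]. Qed.
Lemma lsum_rev a n : lsum (fun j => a (n - j)%nat) n = ssum a n.
Proof.
  induction n.
  - reflexivity.
  - rewrite lsum_peel. simpl. rewrite IHn. ring.
Qed.
Lemma ssum_delta (c : nat -> R) m M : (1 <= m)%nat ->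
  ssum (fun j => if Nat.eqb j m then c j else 0) M = if Nat.leb m M then c m else 0.
Proof.
  intros Hm. induction M; cbn [ssum].
  - destruct m; [lia|reflexivity].
  - rewrite IHM. destruct (Nat.eqb_spec (S M) m) as [E|E].
    + subst. destruct (Nat.leb_spec (S M) M); [lia|]. rewrite Nat.leb_refl. ring.
    + destruct (Nat.leb_spec m M); destruct (Nat.leb_spec m (S M)); try ring; lia.
Qed.


Lemma cpt_cont (h : R -> R) x : continuity_pt h x -> continuous h x.
Proof. intros H. apply continuity_pt_filterlim, H. Qed.

Lemma ex_RInt_cpt (h : R -> R) a b : (forall x, continuity_pt h x) -> ex_RInt h a b.
Proof. intros H. apply (@ex_RInt_continuous R_CompleteNormedModule). intros; apply cpt_cont, H. Qed.

Lemma RInt_abs_le (g : R -> R) a b l M : a <= b -> is_RInt g a b l ->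
  (forall x, a <= x <= b -> Rabs (g x) <= M) -> Rabs l <= (b - a) * M.
Proof.
  intros Hab Hl HM.
  assert (H := norm_RInt_le_const_abs g a b l M).
  replace (b - a) with (Rabs (b - a)) by (apply Rabs_pos_eq; lra).
  apply H; auto. intros x Hx. rewrite Rmin_left, Rmax_right in Hx by lra. apply HM; auto.
Qed.

Lemma int_const (c a b : R) : is_RInt (fun _ => c) a b ((b - a) * c).
Proof. apply (@is_RInt_const R_NormedModule a b c). Qed.

Lemma is_RInt_ssum (g : nat -> R -> R) (l : nat -> R) a b M :
  (forall m, (1 <= m <= M)%nat -> is_RInt (g m) a b (l m)) ->
  is_RInt (fun x => ssum (fun m => g m x) M) a b (ssum l M).
Proof.
  induction M; intros H; simpl.
  - generalize (int_const 0 a b); rewrite Rmult_0_r; auto.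
  - apply (is_RInt_plus (fun x => ssum (fun m => g m x) M) (g (S M))).
    + apply IHM. intros; apply H; lia.
    + apply H; lia.
Qed.

Lemma is_RInt_reflect (psi : R -> R) t L :
  is_RInt psi 0 1 L -> is_RInt (fun u => psi (t - u)) (t - 1) t L.
Proof.
  intros H.
  assert (H1 : is_RInt psi ((-1) * (t - 1) + t) ((-1) * t + t) (opp L)).
  { replace ((-1) * (t - 1) + t) with 1 by ring. replace ((-1) * t + t) with 0 by ring.
    apply is_RInt_swap. apply H. }
  apply is_RInt_comp_lin in H1.
  apply is_RInt_opp in H1. rewrite opp_opp in H1.
  eapply is_RInt_ext; [|exact H1]. intros x _. simpl.
  unfold scal, opp; simpl. unfold mult; simpl. replace (-1 * x + t) with (t - x) by ring. ring.
Qed.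

Lemma is_RInt_val (f : R -> R) a b (l l' : R) : is_RInt f a b l -> l = l' -> is_RInt f a b l'.
Proof. intros H E; subst; auto. Qed.

Lemma exd_cont (f : R -> R) x : ex_derive f x -> continuous f x.
Proof. apply (@ex_derive_continuous R_AbsRing R_NormedModule). Qed.

Lemma is_RInt_deriv (F f : R -> R) a b :
  (forall x, is_derive F x (f x)) -> (forall x, continuous f x) ->
  is_RInt f a b (F b - F a).
Proof.
  intros H1 H2.
  replace (F b - F a) with (minus (F b) (F a)) by reflexivity.
  apply (@is_RInt_derive R_CompleteNormedModule); intros; auto.
Qed.

Lemma int_cos (c a b : R) : c <> 0 ->
  is_RInt (fun t => cos (c * t)) a b ((sin (c * b) - sin (c * a)) / c).
Proof.
  intros Hc. replace ((sin (c * b) - sin (c * a)) / c) with (sin (c*b)/c - sin (c*a)/c) by (field; auto).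
  apply (is_RInt_deriv (fun t => sin (c * t) / c)).
  - intros x. auto_derive; auto. field; auto.
  - intros x. apply exd_cont. auto_derive; auto.
Qed.

Lemma int_sin (c a b : R) : c <> 0 ->
  is_RInt (fun t => sin (c * t)) a b ((cos (c * a) - cos (c * b)) / c).
Proof.
  intros Hc. replace ((cos (c * a) - cos (c * b)) / c) with ((- cos (c*b)/c) - (- cos (c*a)/c)) by (field; auto).
  apply (is_RInt_deriv (fun t => - cos (c * t) / c)).
  - intros x. auto_derive; auto. field; auto.
  - intros x. apply exd_cont. auto_derive; auto.
Qed.

Lemma pi_ne0 : PI <> 0.
Proof. pose proof PI_RGT_0; lra. Qed.
Lemma IZR_ne0 k : k <> 0%Z -> IZR k <> 0.
Proof. intros Hk E. apply Hk. apply eq_IZR. auto. Qed.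

Lemma cZ_neq0 (k : Z) : k <> 0%Z -> 2 * PI * IZR k <> 0.
Proof.
  intros Hk. pose proof PI_RGT_0. apply IZR_neq in Hk.
  intros E. apply Rmult_integral in E. destruct E as [E|E]; [lra|auto].
Qed.

Lemma int_cosZ (k : Z) a : k <> 0%Z ->
  is_RInt (fun t => cos (2 * PI * IZR k * t)) a (a + 1) 0.
Proof.
  intros Hk. replace 0 with ((sin (2 * PI * IZR k * (a + 1)) - sin (2 * PI * IZR k * a)) / (2 * PI * IZR k)).
  - apply int_cos, cZ_neq0, Hk.
  - replace (2 * PI * IZR k * (a + 1)) with (2 * PI * IZR k * a + 2 * PI * IZR k) by ring.
    rewrite sin_perZ. unfold Rdiv. ring.
Qed.

Lemma int_sinZ (k : Z) a : k <> 0%Z ->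
  is_RInt (fun t => sin (2 * PI * IZR k * t)) a (a + 1) 0.
Proof.
  intros Hk. replace 0 with ((cos (2 * PI * IZR k * a) - cos (2 * PI * IZR k * (a + 1))) / (2 * PI * IZR k)).
  - apply int_sin, cZ_neq0, Hk.
  - replace (2 * PI * IZR k * (a + 1)) with (2 * PI * IZR k * a + 2 * PI * IZR k) by ring.
    rewrite cos_perZ. unfold Rdiv. ring.
Qed.


Lemma int01_cosZ (k : Z) : is_RInt (fun t => cos (2 * PI * IZR k * t)) 0 1 (if Z.eqb k 0 then 1 else 0).
Proof.
  destruct (Z.eqb_spec k 0) as [E|E].
  - subst. assert (H := int_const 1 0 1). replace ((1-0)*1) with 1 in H by ring.
    eapply is_RInt_ext; [|exact H]. intros x _. rewrite Rmult_0_r, Rmult_0_l, cos_0. auto.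
  - replace 1 with (0 + 1) at 1 by ring. apply int_cosZ; auto.
Qed.

Lemma int01_sinZ (k : Z) : is_RInt (fun t => sin (2 * PI * IZR k * t)) 0 1 0.
Proof.
  destruct (Z.eqb_spec k 0) as [E|E].
  - subst. assert (H := int_const 0 0 1). replace ((1-0)*0) with 0 in H by ring.
    eapply is_RInt_ext; [|exact H]. intros x _. rewrite Rmult_0_r, Rmult_0_l, sin_0. auto.
  - replace 1 with (0 + 1) at 1 by ring. apply int_sinZ; auto.
Qed.

Lemma int01_tcosZ (k : Z) : k <> 0%Z -> is_RInt (fun t => t * cos (2 * PI * IZR k * t)) 0 1 0.
Proof.
  intros Hk. set (c := 2 * PI * IZR k). assert (Hc : c <> 0) by (apply cZ_neq0; auto).
  eapply is_RInt_val.
  - apply (is_RInt_deriv (fun t => t * sin (c * t) / c + cos (c * t) / (c*c))).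
    + intros x. auto_derive; auto. field; auto.
    + intros x. apply exd_cont. auto_derive; auto.
  - unfold c. rewrite Rmult_1_r, Rmult_0_r. destruct (cs_Z k) as [A B]. rewrite A, B, cos_0. rewrite sin_0. field.
    split; [apply IZR_ne0; auto | apply pi_ne0].
Qed.

Lemma int01_tsinZ (k : Z) : k <> 0%Z ->
  is_RInt (fun t => t * sin (2 * PI * IZR k * t)) 0 1 (- / (2 * PI * IZR k)).
Proof.
  intros Hk. set (c := 2 * PI * IZR k). assert (Hc : c <> 0) by (apply cZ_neq0; auto).
  eapply is_RInt_val.
  - apply (is_RInt_deriv (fun t => - t * cos (c * t) / c + sin (c * t) / (c*c))).
    + intros x. auto_derive; auto. field; auto.
    + intros x. apply exd_cont. auto_derive; auto.
  - unfold c. rewrite Rmult_1_r, Rmult_0_r. destruct (cs_Z k) as [A B]. rewrite A, B, sin_0. field.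
    split; [apply IZR_ne0; auto | apply pi_ne0].
Qed.


Definition Cs N x := lsum (fun j => cos (INR j * x)) N.
Definition Sn N x := lsum (fun j => sin (INR j * x)) N.
Definition Kx N x := INR N + 2 * ssum (fun m => (INR N - INR m) * cos (INR m * x)) N.

Lemma cross_gen N x y : Cs N x * cos y + Sn N x * sin y = lsum (fun j => cos (y - INR j * x)) N.
Proof.
  induction N; unfold Cs, Sn in *; simpl.
  - ring.
  - rewrite <- IHN. rewrite cos_minus. ring.
Qed.

Lemma cross N x : Cs N x * cos (INR N * x) + Sn N x * sin (INR N * x) = ssum (fun m => cos (INR m * x)) N.
Proof.
  rewrite cross_gen. rewrite <- lsum_rev. apply lsum_ext. intros j Hj.
  rewrite minus_INR by lia. f_equal. ring.
Qed.

Lemma K_sq N x : Cs N x ^ 2 + Sn N x ^ 2 = Kx N x.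
Proof.
  induction N.
  - unfold Cs, Sn, Kx; simpl. ring.
  - assert (E1 : Cs (S N) x = Cs N x + cos (INR N * x)) by reflexivity.
    assert (E2 : Sn (S N) x = Sn N x + sin (INR N * x)) by reflexivity.
    rewrite E1, E2.
    assert (P := sin2_cos2 (INR N * x)). unfold Rsqr in P.
    assert (Hc := cross N x).
    assert (EK : Kx (S N) x = Kx N x + 1 + 2 * ssum (fun m => cos (INR m * x)) N).
    { unfold Kx. cbn [ssum]. rewrite S_INR. replace (INR N + 1 - (INR N + 1)) with 0 by ring.
      rewrite (ssum_ext (fun m => (INR N + 1 - INR m) * cos (INR m * x))
                        (fun m => (INR N - INR m) * cos (INR m * x) + cos (INR m * x))) by (intros; ring).
      rewrite ssum_plus. ring_simplify. ring. }
    rewrite EK, <- IHN, <- Hc. nra.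
Qed.

Lemma K_nonneg N x : 0 <= Kx N x.
Proof. rewrite <- K_sq. nra. Qed.

Lemma K_geo N x : Cs N x * (cos x - 1) - Sn N x * sin x = cos (INR N * x) - 1 /\
                  Cs N x * sin x + Sn N x * (cos x - 1) = sin (INR N * x).
Proof.
  induction N.
  - unfold Cs, Sn; simpl. rewrite ?Rmult_0_l, ?cos_0, ?sin_0. split; ring.
  - destruct IHN as [I1 I2].
    assert (E1 : Cs (S N) x = Cs N x + cos (INR N * x)) by reflexivity.
    assert (E2 : Sn (S N) x = Sn N x + sin (INR N * x)) by reflexivity.
    rewrite E1, E2, S_INR. replace ((INR N + 1) * x) with (INR N * x + x) by ring.
    rewrite cos_plus, sin_plus. split; nra.
Qed.

Lemma K_bound N x : Kx N x * (1 - cos x) <= 2.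
Proof.
  rewrite <- K_sq. destruct (K_geo N x) as [G1 G2].
  assert (P1 := sin2_cos2 x). assert (P2 := sin2_cos2 (INR N * x)). unfold Rsqr in P1, P2.
  assert (Hc := COS_bound (INR N * x)).
  set (C := Cs N x) in *. set (S := Sn N x) in *.
  set (a := cos x) in *. set (b := sin x) in *.
  assert (Heq : (C^2 + S^2) * ((a - 1)^2 + b^2) = (C * (a - 1) - S * b)^2 + (C * b + S * (a - 1))^2) by ring.
  rewrite G1, G2 in Heq.
  replace ((a - 1)^2 + b^2) with (2 * (1 - a)) in Heq by nra.
  nra.
Qed.

Definition KK N u := Kx N (2 * PI * u).

Lemma KK_expand N u : KK N u = INR N + 2 * ssum (fun m => (INR N - INR m) * cos (2 * PI * IZR (Z.of_nat m) * u)) N.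
Proof.
  unfold KK, Kx. f_equal. f_equal. apply ssum_ext. intros m _. rewrite INR_Z. f_equal. f_equal. ring.
Qed.

Lemma KK_int N t : is_RInt (KK N) (t - 1) t (INR N).
Proof.
  apply (is_RInt_ext (fun u => INR N + 2 * ssum (fun m => (INR N - INR m) * cos (2 * PI * IZR (Z.of_nat m) * u)) N)).
  { intros x _. symmetry. apply KK_expand. }
  eapply is_RInt_val.
  - apply (is_RInt_plus (V := R_NormedModule) (fun _ => INR N) (fun u => 2 * ssum (fun m => (INR N - INR m) * cos (2 * PI * IZR (Z.of_nat m) * u)) N)).
    + apply int_const.
    + apply (is_RInt_scal (V := R_NormedModule) (fun u => ssum (fun m => (INR N - INR m) * cos (2 * PI * IZR (Z.of_nat m) * u)) N)).
      apply (is_RInt_ssum (fun m u => (INR N - INR m) * cos (2 * PI * IZR (Z.of_nat m) * u)) (fun _ => 0)).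
      intros m Hm. eapply is_RInt_val.
      * apply (is_RInt_scal (V := R_NormedModule) (fun u => cos (2 * PI * IZR (Z.of_nat m) * u))).
        replace t with (t - 1 + 1) at 2 by ring. apply int_cosZ. lia.
      * unfold scal; simpl; unfold mult; simpl. ring.
  - rewrite ssum_zero. unfold plus, scal; simpl; unfold mult, plus; simpl. ring.
Qed.


Definition Acoef (phi : R -> R) (m : nat) : R := RInt (fun s => phi s * cos (2*PI*INR m*s)) 0 1.
Definition Bcoef (phi : R -> R) (m : nat) : R := RInt (fun s => phi s * sin (2*PI*INR m*s)) 0 1.
Definition sig phi N t := Acoef phi 0 + ssum (fun m => (1 - INR m / INR N) *
   (2 * (Acoef phi m * cos (2*PI*INR m*t) + Bcoef phi m * sin (2*PI*INR m*t)))) N.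

Lemma cpt_cos (c : R) x : continuity_pt (fun s => cos (c*s)) x.
Proof. apply continuity_pt_filterlim. apply (exd_cont (fun s => _ (c*s))). auto_derive; auto. Qed.
Lemma cpt_sin (c : R) x : continuity_pt (fun s => sin (c*s)) x.
Proof. apply continuity_pt_filterlim. apply (exd_cont (fun s => _ (c*s))). auto_derive; auto. Qed.
Lemma cpt_mul (f g : R -> R) x : continuity_pt f x -> continuity_pt g x -> continuity_pt (fun s => f s * g s) x.
Proof. intros; apply (continuity_pt_mult f g); auto. Qed.

Lemma is_RInt_scalR (f : R -> R) a b k l : is_RInt f a b l -> is_RInt (fun x => k * f x) a b (k * l).
Proof. intros H. apply (is_RInt_scal (V := R_NormedModule) f a b k l H). Qed.
Lemma is_RInt_plusR (f g : R -> R) a b l1 l2 : is_RInt f a b l1 -> is_RInt g a b l2 ->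
  is_RInt (fun x => f x + g x) a b (l1 + l2).
Proof. intros H1 H2. apply (is_RInt_plus (V := R_NormedModule) f g a b l1 l2 H1 H2). Qed.
Lemma is_RInt_minusR (f g : R -> R) a b l1 l2 : is_RInt f a b l1 -> is_RInt g a b l2 ->
  is_RInt (fun x => f x - g x) a b (l1 - l2).
Proof. intros H1 H2. apply (is_RInt_minus (V := R_NormedModule) f g a b l1 l2 H1 H2). Qed.
Lemma is_RInt_extR (f g : R -> R) a b l : (forall x, f x = g x) -> is_RInt f a b l -> is_RInt g a b l.
Proof. intros E H. apply (is_RInt_ext f g); auto. Qed.

Lemma RInt_cos_correct phi (Hc : forall x, continuity_pt phi x) m :
  is_RInt (fun s => phi s * cos (2*PI*INR m*s)) 0 1 (Acoef phi m).
Proof.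
  apply (RInt_correct (V := R_CompleteNormedModule)). apply ex_RInt_cpt. intros x.
  apply cpt_mul; auto. apply (cpt_cos (2*PI*INR m)).
Qed.
Lemma RInt_sin_correct phi (Hc : forall x, continuity_pt phi x) m :
  is_RInt (fun s => phi s * sin (2*PI*INR m*s)) 0 1 (Bcoef phi m).
Proof.
  apply (RInt_correct (V := R_CompleteNormedModule)). apply ex_RInt_cpt. intros x.
  apply cpt_mul; auto. apply (cpt_sin (2*PI*INR m)).
Qed.

Lemma conv_term phi (Hc : forall x, continuity_pt phi x) t m :
  is_RInt (fun u => phi (t - u) * cos (2*PI*INR m*u)) (t-1) t
    (cos (2*PI*INR m*t) * Acoef phi m + sin (2*PI*INR m*t) * Bcoef phi m).
Proof.
  assert (H := is_RInt_plusR _ _ 0 1 _ _ (is_RInt_scalR _ 0 1 (cos (2*PI*INR m*t)) _ (RInt_cos_correct phi Hc m))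
                (is_RInt_scalR _ 0 1 (sin (2*PI*INR m*t)) _ (RInt_sin_correct phi Hc m))).
  apply (is_RInt_reflect _ t) in H.
  eapply is_RInt_extR; [|exact H]. intros u. simpl.
  replace (2 * PI * INR m * u) with (2*PI*INR m*t - 2*PI*INR m*(t-u)) by ring.
  rewrite cos_minus. ring.
Qed.

Lemma conv phi (Hc : forall x, continuity_pt phi x) N t : (1 <= N)%nat ->
  is_RInt (fun u => phi (t - u) * KK N u) (t-1) t (INR N * sig phi N t).
Proof.
  intros HN.
  assert (HN' : INR N <> 0) by (apply not_0_INR; lia).
  assert (H0 := conv_term phi Hc t 0).
  assert (H := is_RInt_plusR _ _ (t-1) t _ _ (is_RInt_scalR _ _ _ (INR N) _ H0)
     (is_RInt_scalR _ _ _ 2 _ (is_RInt_ssum (fun m u => (INR N - INR m) * (phi (t - u) * cos (2*PI*INR m*u)))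
        (fun m => (INR N - INR m) * (cos (2*PI*INR m*t) * Acoef phi m + sin (2*PI*INR m*t) * Bcoef phi m))
        (t-1) t N (fun m _ => is_RInt_scalR _ _ _ _ _ (conv_term phi Hc t m))))).
  eapply is_RInt_val; [eapply is_RInt_extR; [|exact H]|].
  - intros u. simpl. unfold KK, Kx.
    rewrite Rmult_0_r, Rmult_0_l, cos_0, Rmult_1_r.
    rewrite (ssum_ext (fun m => ((INR N - INR m) * (phi (t - u) * cos (2 * PI * INR m * u))))
        (fun m => (phi (t - u)) * ((INR N - INR m) * cos (INR m * (2 * PI * u))))).
    + rewrite ssum_scal. ring.
    + intros m _. replace (INR m * (2 * PI * u)) with (2 * PI * INR m * u) by ring. ring.
  - unfold sig. simpl. rewrite Rmult_0_r, Rmult_0_l, cos_0, sin_0. 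
    rewrite (Rmult_plus_distr_l (INR N) (Acoef phi 0)), <- (ssum_scal 2), <- (ssum_scal (INR N)).
    f_equal; [ring|]. apply ssum_ext. intros m _. field. auto.
Qed.

Lemma cos_far d u : 0 < d <= 1/2 -> d <= Rabs u <= 1 - d -> cos (2*PI*u) <= cos (2*PI*d).
Proof.
  intros Hd Hu.
  assert (Hpi := PI_RGT_0).
  assert (key : forall v, d <= v <= 1/2 -> cos (2*PI*v) <= cos (2*PI*d)).
  { intros v Hv. destruct (Req_dec v d) as [E|E]. { subst; lra. }
    left. apply cos_decreasing_1; nra. }
  assert (Habs : cos (2*PI*u) = cos (2*PI*Rabs u)).
  { unfold Rabs; destruct (Rcase_abs u); auto. rewrite (cos_sym (2*PI*u)). f_equal; ring. }
  rewrite Habs. destruct (Rle_dec (Rabs u) (1/2)).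
  - apply key; lra.
  - rewrite <- (cos_refZ 1 (2*PI*Rabs u)).
    replace (2 * PI * IZR 1 - 2 * PI * Rabs u) with (2*PI*(1 - Rabs u)) by ring. apply key; lra.
Qed.


Theorem fejer_real (phi : R -> R) : (forall x, continuity_pt phi x) -> phi 0 = phi 1 ->
  forall eps, 0 < eps -> exists N0, forall N, (N0 <= N)%nat -> forall t, 0 <= t <= 1 ->
  Rabs (phi t - sig phi N t) < eps.
Proof.
  intros Hc H01 eps Heps.
  assert (He4 : 0 < eps / 4) by lra.
  destruct (Heine_cor2 (f:=phi) (a:=0) (b:=1) (fun x _ => Hc x) (mkposreal (eps/4) He4)) as [d0 Hd0].
  simpl in Hd0.
  destruct (continuity_ab_maj (fun x => Rabs (phi x)) 0 1) as [Mx [HM _]].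
  { lra. }
  { intros c _. apply (continuity_pt_comp phi Rabs). apply Hc. apply Rcontinuity_abs. }
  set (M := Rabs (phi Mx)) in *. simpl in HM.
  assert (HM0 : 0 <= M) by apply Rabs_pos.
  assert (Hd0p := cond_pos d0).
  set (d := Rmin d0 (1/2)).
  assert (Hd : 0 < d <= 1/2).
  { unfold d. split; [apply Rmin_glb_lt; lra | apply Rmin_r]. }
  assert (Hdd0 : d <= d0) by apply Rmin_l.
  set (c := 1 - cos (2*PI*d)).
  assert (Hpi := PI_RGT_0).
  assert (Hcpos : 0 < c).
  { unfold c. assert (cos (2*PI*d) < cos 0). { apply cos_decreasing_1; nra. }
    rewrite cos_0 in H. lra. }
  destruct (INR_unbounded (8 * M / (c * eps))) as [N1 HN1].
  exists (S N1). intros N HN t Ht.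
  assert (HN1' : (1 <= N)%nat) by lia.
  assert (HNle : INR N1 < INR N) by (apply lt_INR; lia).
  assert (HNpos : 0 < INR N) by (apply lt_0_INR; lia).
  assert (H8 : 8 * M < INR N * (c * eps)).
  { assert (E : 8 * M = (8 * M / (c * eps)) * (c * eps)) by (field; lra).
    rewrite E. apply Rmult_lt_compat_r; nra. }
  assert (Hpt : forall u, t - 1 <= u <= t ->
    norm ((phi (t-u) - phi t) * KK N u) <= eps/2 * KK N u + 4*M/c).
  { intros u Hu.
    assert (HK := K_nonneg N (2*PI*u)). fold (KK N u) in HK.
    change (norm ((phi (t-u) - phi t) * KK N u)) with (Rabs ((phi (t-u) - phi t) * KK N u)).
    rewrite Rabs_mult, (Rabs_pos_eq (KK N u)) by auto.
    assert (H4c : 0 <= 4 * M / c) by (apply Rmult_le_pos; [lra| left; apply Rinv_0_lt_compat; lra]).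
    assert (near : Rabs (phi (t-u) - phi t) <= eps / 2 -> Rabs (phi (t-u) - phi t) * KK N u <= eps/2 * KK N u + 4*M/c).
    { intros Hn. assert (Rabs (phi (t-u) - phi t) * KK N u <= eps/2 * KK N u) by (apply Rmult_le_compat_r; auto).
      lra. }
    destruct (Rlt_dec (Rabs u) d) as [Hu1|Hu1].
    { apply near. left. apply Rlt_trans with (eps/4); [|lra]. apply Hd0; try lra.
      replace (t - u - t) with (- u) by ring. rewrite Rabs_Ropp. lra. }
    destruct (Rlt_dec (1 - d) u) as [Hu2|Hu2].
    { apply near.
      assert (A1 : Rabs (phi (t-u) - phi 0) < eps/4) by (apply Hd0; try lra; rewrite Rminus_0_r, Rabs_pos_eq; lra).
      assert (A2 : Rabs (phi 1 - phi t) < eps/4) by (apply Hd0; try lra; rewrite Rabs_pos_eq; lra).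
      replace (phi (t-u) - phi t) with ((phi (t-u) - phi 0) + (phi 1 - phi t)) by (rewrite H01; ring).
      eapply Rle_trans; [apply Rabs_triang|]. lra. }
    destruct (Rlt_dec u (-(1 - d))) as [Hu3|Hu3].
    { apply near.
      assert (A1 : Rabs (phi (t-u) - phi 1) < eps/4).
      { apply Hd0; try lra. rewrite Rabs_left1; lra. }
      assert (A2 : Rabs (phi 0 - phi t) < eps/4).
      { apply Hd0; try lra. rewrite Rabs_left1; lra. }
      replace (phi (t-u) - phi t) with ((phi (t-u) - phi 1) + (phi 0 - phi t)) by (rewrite H01; ring).
      eapply Rle_trans; [apply Rabs_triang|]. lra. }
    assert (Hfar : d <= Rabs u <= 1 - d).
    { split; [lra|]. unfold Rabs; destruct (Rcase_abs u); lra. }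
    assert (Hcos := cos_far d u Hd Hfar).
    assert (HKb := K_bound N (2*PI*u)). fold (KK N u) in HKb.
    assert (HKc : KK N u * c <= 2).
    { assert (0 <= KK N u * (cos (2*PI*d) - cos (2*PI*u))) by (apply Rmult_le_pos; lra).
      unfold c. nra. }
    assert (HKc' : KK N u <= 2 / c).
    { apply (Rmult_le_reg_r c); auto. unfold Rdiv. rewrite Rmult_assoc, Rinv_l; lra. }
    assert (Hphi : Rabs (phi (t-u) - phi t) <= 2 * M).
    { pose proof (Rabs_triang (phi (t-u)) (- phi t)) as Tr. rewrite Rabs_Ropp in Tr. replace (phi (t-u) + - phi t) with (phi (t-u) - phi t) in Tr by ring.
      assert (Rabs (phi (t-u)) <= M) by (apply HM; lra).
      assert (Rabs (phi t) <= M) by (apply HM; lra). lra. }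
    assert (Rabs (phi (t-u) - phi t) * KK N u <= 2 * M * (2 / c)).
    { apply Rmult_le_compat; auto; apply Rabs_pos. }
    assert (eps / 2 * KK N u >= 0) by nra.
    replace (4 * M / c) with (2 * M * (2 / c)) by (field; lra). lra. }
  assert (I1 := conv phi Hc N t HN1').
  assert (I2 := KK_int N t).
  assert (I3 := is_RInt_minusR _ _ _ _ _ _ I1 (is_RInt_scalR _ _ _ (phi t) _ I2)).
  assert (I4 := is_RInt_plusR _ _ _ _ _ _ (is_RInt_scalR _ _ _ (eps/2) _ I2) (int_const (4*M/c) (t-1) t)).
  assert (I3' : is_RInt (fun u => (phi (t-u) - phi t) * KK N u) (t-1) t (INR N * sig phi N t - phi t * INR N)).
  { eapply is_RInt_extR; [|exact I3]. intros; simpl; ring. }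
  assert (Hle := norm_RInt_le _ _ (t-1) t _ _ ltac:(lra) Hpt I3' I4).
  change (norm (INR N * sig phi N t - phi t * INR N)) with (Rabs (INR N * sig phi N t - phi t * INR N)) in Hle.
  replace (t - (t - 1)) with 1 in Hle by ring.
  assert (E : Rabs (phi t - sig phi N t) * INR N = Rabs (INR N * sig phi N t - phi t * INR N)).
  { rewrite <- (Rabs_pos_eq (INR N)) at 1 by lra. rewrite <- Rabs_mult.
    rewrite <- Rabs_Ropp. f_equal. ring. }
  assert (Hfin : Rabs (phi t - sig phi N t) * INR N < eps * INR N).
  { rewrite E. eapply Rle_lt_trans; [exact Hle|].
    assert (4 * M / c < eps * INR N / 2).
    { apply (Rmult_lt_reg_r (2 * c)); [lra|]. unfold Rdiv.
      replace (4 * M * / c * (2 * c)) with (8 * M) by (field; lra).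
      replace (eps * INR N * / 2 * (2 * c)) with (INR N * (c * eps)) by (field; lra). lra. }
    lra. }
  apply Rmult_lt_reg_r with (INR N); auto.
Qed.


Lemma im_le_Cmod c : Rabs (Im c) <= Cmod c.
Proof.
  unfold Cmod, Im. rewrite <- sqrt_Rsqr_abs. apply sqrt_le_1_alt. unfold Rsqr. simpl. nra.
Qed.
Lemma Cmod_le_sum c : Cmod c <= Rabs (Re c) + Rabs (Im c).
Proof.
  unfold Cmod, Re, Im.
  rewrite <- (Rabs_pos_eq (Rabs (fst c) + Rabs (snd c))) by (pose proof (Rabs_pos (fst c)); pose proof (Rabs_pos (snd c)); lra).
  rewrite <- sqrt_Rsqr_abs. apply sqrt_le_1_alt. unfold Rsqr.
  pose proof (pow2_abs (fst c)). pose proof (pow2_abs (snd c)).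
  pose proof (Rabs_pos (fst c)). pose proof (Rabs_pos (snd c)). simpl in *. nra.
Qed.

Lemma Cpair_eq (a b : C) : Re a = Re b -> Im a = Im b -> a = b.
Proof. destruct a, b; simpl; intros; subst; auto. Qed.

Lemma kterm_eq (alpha : Z -> R) h t : h <> 0%Z ->
  kterm alpha h t = (alpha h * sin (2*PI*IZR h*t) / (2*PI*IZR h),
                     alpha h * (1 - cos (2*PI*IZR h*t)) / (2*PI*IZR h)).
Proof.
  intros Hh. assert (Hc := cZ_neq0 h Hh). assert (Hi := IZR_ne0 h Hh). assert (Hp := pi_ne0).
  unfold kterm, e. replace (2 * PI * (IZR h * t)) with (2*PI*IZR h*t) by ring.
  unfold Cdiv, Cinv, Cmult, Cminus, Cplus, Copp, RtoC, Ci. simpl.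
  f_equal; field; auto.
Qed.

Definition wN (N m : nat) := 1 - INR m / INR N.
Definition ap (alpha : Z -> R) (m : nat) := alpha (Z.of_nat m).
Definition an (alpha : Z -> R) (m : nat) := alpha (- Z.of_nat m)%Z.

Lemma fejer_sum_eq alpha N M t :
  fejer_sum alpha N M t =
   (ssum (fun m => wN N m * ((ap alpha m + an alpha m) * sin (2*PI*INR m*t) / (2*PI*INR m))) M,
    ssum (fun m => wN N m * ((ap alpha m - an alpha m) * (1 - cos (2*PI*INR m*t)) / (2*PI*INR m))) M).
Proof.
  induction M.
  - reflexivity.
  - change (fejer_sum alpha N (S M) t) with (fejer_sum alpha N M t + RtoC (1 - INR (S M) / INR N) * (kterm alpha (Z.of_nat (S M)) t + kterm alpha (- Z.of_nat (S M)) t))%C.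
    cbn [ssum]. rewrite IHM.
    assert (H1 : Z.of_nat (S M) <> 0%Z) by lia.
    assert (H2 : (- Z.of_nat (S M))%Z <> 0%Z) by lia.
    rewrite (kterm_eq alpha _ t H1), (kterm_eq alpha _ t H2).
    rewrite opp_IZR, INR_Z.
    assert (Hm : INR (S M) <> 0) by (apply not_0_INR; lia). assert (Hp := pi_ne0).
    unfold Cmult, Cplus, RtoC. cbn [fst snd]. unfold wN, ap, an. set (w := 1 - INR (S M) / INR N).
    replace (2 * PI * - INR (S M) * t) with (- (2 * PI * INR (S M) * t)) by ring.
    rewrite sin_antisym, <- cos_sym.
    f_equal; field; auto.
Qed.

Lemma fejer_eq alpha N t :
  fejer alpha N t =
   (alpha 0%Z * t + ssum (fun m => wN N m * ((ap alpha m + an alpha m) * sin (2*PI*INR m*t) / (2*PI*INR m))) N,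
    ssum (fun m => wN N m * ((ap alpha m - an alpha m) * (1 - cos (2*PI*INR m*t)) / (2*PI*INR m))) N).
Proof.
  unfold fejer. rewrite fejer_sum_eq. unfold Cplus, RtoC. simpl. f_equal; ring.
Qed.

Lemma fhat_pair (G : R -> C) h p q :
  is_RInt (fun t => Re (G t) * cos (2*PI*IZR h*t) + Im (G t) * sin (2*PI*IZR h*t)) 0 1 p ->
  is_RInt (fun t => Im (G t) * cos (2*PI*IZR h*t) - Re (G t) * sin (2*PI*IZR h*t)) 0 1 q ->
  fhat G h = (p, q).
Proof.
  intros Hp Hq. unfold fhat. apply (is_RInt_unique (V := C_R_CompleteNormedModule)).
  apply (is_RInt_fct_extend_pair (U := R_NormedModule) (V := R_NormedModule)).
  - eapply is_RInt_ext; [|exact Hp]. intros x _. unfold e, Cmult. simpl.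
    replace (2 * PI * (- IZR h * x)) with (- (2*PI*IZR h*x)) by ring.
    rewrite sin_antisym, <- cos_sym. unfold Re, Im. ring.
  - eapply is_RInt_ext; [|exact Hq]. intros x _. unfold e, Cmult. simpl.
    replace (2 * PI * (- IZR h * x)) with (- (2*PI*IZR h*x)) by ring.
    rewrite sin_antisym, <- cos_sym. unfold Re, Im. ring.
Qed.


Definition uf (f : R -> C) := fun t => Re (f t).
Definition vf (f : R -> C) := fun t => Im (f t).
Definition Pc (f : R -> C) h : R := RInt (fun t => Re (f t) * cos (2*PI*IZR h*t) + Im (f t) * sin (2*PI*IZR h*t)) 0 1.
Definition Qc (f : R -> C) h : R := RInt (fun t => Im (f t) * cos (2*PI*IZR h*t) - Re (f t) * sin (2*PI*IZR h*t)) 0 1.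

Definition contf (f : R -> C) := (forall x, continuity_pt (uf f) x) /\ (forall x, continuity_pt (vf f) x).

Lemma is_RInt_uniqR (g : R -> R) a b l : is_RInt g a b l -> RInt g a b = l.
Proof. apply (is_RInt_unique (V := R_CompleteNormedModule)). Qed.

Lemma is_RInt_extI (f g : R -> R) a b l : a <= b -> (forall x, a < x < b -> f x = g x) -> is_RInt f a b l -> is_RInt g a b l.
Proof. intros Hab E H. apply (is_RInt_ext f g); auto. rewrite Rmin_left, Rmax_right by lra. auto. Qed.

Lemma Pc_correct f h : contf f ->
  is_RInt (fun t => Re (f t) * cos (2*PI*IZR h*t) + Im (f t) * sin (2*PI*IZR h*t)) 0 1 (Pc f h).
Proof.
  intros [Hu Hv]. apply (RInt_correct (V := R_CompleteNormedModule)). apply ex_RInt_cpt. intros x.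
  apply (continuity_pt_plus (fun t => Re (f t) * cos (2*PI*IZR h*t)) (fun t => Im (f t) * sin (2*PI*IZR h*t)));
  apply cpt_mul; auto; [apply (cpt_cos (2*PI*IZR h)) | apply (cpt_sin (2*PI*IZR h))].
Qed.
Lemma Qc_correct f h : contf f ->
  is_RInt (fun t => Im (f t) * cos (2*PI*IZR h*t) - Re (f t) * sin (2*PI*IZR h*t)) 0 1 (Qc f h).
Proof.
  intros [Hu Hv]. apply (RInt_correct (V := R_CompleteNormedModule)). apply ex_RInt_cpt. intros x.
  apply (continuity_pt_minus (fun t => Im (f t) * cos (2*PI*IZR h*t)) (fun t => Re (f t) * sin (2*PI*IZR h*t)));
  apply cpt_mul; auto; [apply (cpt_cos (2*PI*IZR h)) | apply (cpt_sin (2*PI*IZR h))].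
Qed.

Lemma fhat_PQ f h : contf f -> fhat f h = (Pc f h, Qc f h).
Proof. intros Hc. apply fhat_pair; [apply Pc_correct | apply Qc_correct]; auto. Qed.

Lemma cosZp m x : cos (2*PI*IZR (Z.of_nat m)*x) = cos (2*PI*INR m*x).
Proof. rewrite INR_Z; auto. Qed.
Lemma sinZp m x : sin (2*PI*IZR (Z.of_nat m)*x) = sin (2*PI*INR m*x).
Proof. rewrite INR_Z; auto. Qed.
Lemma cosZn m x : cos (2*PI*IZR (- Z.of_nat m)*x) = cos (2*PI*INR m*x).
Proof. rewrite opp_IZR, INR_Z. rewrite cos_sym. f_equal. ring. Qed.
Lemma sinZn m x : sin (2*PI*IZR (- Z.of_nat m)*x) = - sin (2*PI*INR m*x).
Proof. rewrite opp_IZR, INR_Z. rewrite <- sin_antisym. f_equal. ring. Qed.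

Lemma PQ_vals f m : contf f ->
  Pc f (Z.of_nat m) = Acoef (uf f) m + Bcoef (vf f) m /\
  Pc f (- Z.of_nat m) = Acoef (uf f) m - Bcoef (vf f) m /\
  Qc f (Z.of_nat m) = Acoef (vf f) m - Bcoef (uf f) m /\
  Qc f (- Z.of_nat m) = Acoef (vf f) m + Bcoef (uf f) m.
Proof.
  intros Hc. destruct Hc as [Hu Hv].
  assert (Au := RInt_cos_correct _ Hu m). assert (Bu := RInt_sin_correct _ Hu m).
  assert (Av := RInt_cos_correct _ Hv m). assert (Bv := RInt_sin_correct _ Hv m).
  unfold Pc, Qc. repeat split; apply is_RInt_uniqR.
  - eapply is_RInt_extR; [|exact (is_RInt_plusR _ _ _ _ _ _ Au Bv)]. intros x. unfold uf, vf. simpl.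
    rewrite cosZp, sinZp. auto.
  - eapply is_RInt_extR; [|exact (is_RInt_minusR _ _ _ _ _ _ Au Bv)]. intros x. unfold uf, vf. simpl.
    rewrite cosZn, sinZn. ring.
  - eapply is_RInt_extR; [|exact (is_RInt_minusR _ _ _ _ _ _ Av Bu)]. intros x. unfold uf, vf. simpl.
    rewrite cosZp, sinZp. auto.
  - eapply is_RInt_extR; [|exact (is_RInt_plusR _ _ _ _ _ _ Av Bu)]. intros x. unfold uf, vf. simpl.
    rewrite cosZn, sinZn. ring.
Qed.

Lemma F0_pt f t : inF0 f -> 0 <= t <= 1 ->
  Re (f t) + Re (f (1 - t)) = Re (f 1) /\ Im (f t) - Im (f (1 - t)) = Im (f 1).
Proof.
  intros H Ht. specialize (H t Ht). split.
  - apply (f_equal Re) in H. rewrite <- H. unfold Cplus, Cconj, Re. simpl. auto.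
  - apply (f_equal Im) in H. rewrite <- H. unfold Cplus, Cconj, Im. simpl. ring.
Qed.

Lemma F0_vals f : inF0 f -> Re (f 0) = 0 /\ Im (f 0) = 0 /\ Im (f 1) = 0.
Proof.
  intros H.
  destruct (F0_pt f 0 H ltac:(lra)) as [A1 B1]. destruct (F0_pt f 1 H ltac:(lra)) as [A2 B2].
  replace (1 - 0) with 1 in * by ring. replace (1 - 1) with 0 in * by ring.
  lra.
Qed.

Lemma Z_cases h : h <> 0%Z -> exists m, (1 <= m)%nat /\ (h = Z.of_nat m \/ h = (- Z.of_nat m)%Z).
Proof.
  intros Hh. exists (Z.to_nat (Z.abs h)). split; [lia|]. lia.
Qed.

Lemma cos_nat01 m : (1 <= m)%nat -> is_RInt (fun t => cos (2*PI*INR m*t)) 0 1 0.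
Proof.
  intros Hm. assert (H := int01_cosZ (Z.of_nat m)). rewrite INR_Z in H.
  destruct (Z.eqb_spec (Z.of_nat m) 0); [lia|]. auto.
Qed.
Lemma sin_nat01 m : is_RInt (fun t => sin (2*PI*INR m*t)) 0 1 0.
Proof. assert (H := int01_sinZ (Z.of_nat m)). rewrite INR_Z in H. auto. Qed.
Lemma tcos_nat01 m : (1 <= m)%nat -> is_RInt (fun t => t * cos (2*PI*INR m*t)) 0 1 0.
Proof. intros Hm. assert (H := int01_tcosZ (Z.of_nat m) ltac:(lia)). rewrite INR_Z in H. auto. Qed.
Lemma tsin_nat01 m : (1 <= m)%nat -> is_RInt (fun t => t * sin (2*PI*INR m*t)) 0 1 (- / (2*PI*INR m)).
Proof. intros Hm. assert (H := int01_tsinZ (Z.of_nat m) ltac:(lia)). rewrite INR_Z in H. auto. Qed.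

Lemma F0_AB f m : contf f -> inF0 f -> (1 <= m)%nat ->
  Acoef (uf f) m = 0 /\ Bcoef (vf f) m = 0.
Proof.
  intros [Hu Hv] HF Hm.
  destruct (F0_vals f HF) as [_ [_ Hv1]].
  assert (HZ : Z.of_nat m <> 0%Z) by lia.
  split.
  - assert (A := RInt_cos_correct _ Hu m).
    assert (A' := is_RInt_reflect _ 1 _ A). replace (1 - 1) with 0 in A' by ring.
    assert (S := is_RInt_plusR _ _ _ _ _ _ A A').
    assert (C := is_RInt_scalR _ _ _ (Re (f 1)) _ (cos_nat01 m Hm)).
    assert (E : Acoef (uf f) m + Acoef (uf f) m = Re (f 1) * 0).
    { apply is_RInt_uniqR in S. rewrite <- S.
      apply is_RInt_uniqR. eapply is_RInt_extI; [lra| |exact C].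
      intros x Hx. unfold uf. cbv beta.
      destruct (F0_pt f x HF ltac:(lra)) as [P _].
      replace (2 * PI * INR m * (1 - x)) with (2*PI*IZR (Z.of_nat m) - 2*PI*INR m*x) by (rewrite INR_Z; ring).
      rewrite cos_refZ. rewrite <- P. ring. }
    lra.
  - assert (B := RInt_sin_correct _ Hv m).
    assert (B' := is_RInt_reflect _ 1 _ B). replace (1 - 1) with 0 in B' by ring.
    assert (S := is_RInt_plusR _ _ _ _ _ _ B B').
    assert (E : Bcoef (vf f) m + Bcoef (vf f) m = 0).
    { apply is_RInt_uniqR in S. rewrite <- S. apply is_RInt_uniqR.
      assert (Z0 := int_const 0 0 1). rewrite Rmult_0_r in Z0.
      eapply is_RInt_extI; [lra| |exact Z0].
      intros x Hx. unfold vf. cbv beta.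
      destruct (F0_pt f x HF ltac:(lra)) as [_ P].
      replace (2 * PI * INR m * (1 - x)) with (2*PI*IZR (Z.of_nat m) - 2*PI*INR m*x) by (rewrite INR_Z; ring).
      rewrite sin_refZ. rewrite Hv1 in P. 
      replace (Im (f (1 - x))) with (Im (f x)) by lra. ring. }
    lra.
Qed.

Lemma F0_P f h : contf f -> inF0 f -> h <> 0%Z -> Pc f h = 0.
Proof.
  intros Hc HF Hh. destruct (Z_cases h Hh) as [m [Hm [E|E]]]; subst;
  destruct (PQ_vals f m Hc) as [P1 [P2 _]]; destruct (F0_AB f m Hc HF Hm) as [A B].
  - rewrite P1, A, B. ring.
  - rewrite P2, A, B. ring.
Qed.

Lemma rel_form f h : contf f ->
  (f 1 + RtoC 2 * Ci * RtoC PI * RtoC (IZR h) * fhat f h)%C =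
  (Re (f 1) - 2*PI*IZR h * Qc f h, Im (f 1) + 2*PI*IZR h * Pc f h).
Proof.
  intros Hc. rewrite fhat_PQ by auto. destruct (f 1) as [a b].
  unfold Cplus, Cmult, RtoC, Ci, Re, Im. simpl. f_equal; ring.
Qed.

Lemma RtoC_eq a (z : C) : RtoC a = z <-> a = Re z /\ 0 = Im z.
Proof.
  destruct z as [x y]. unfold RtoC, Re, Im. simpl. split.
  - intros H. inversion H. auto.
  - intros [A B]. subst. auto.
Qed.


Definition rels (f : R -> C) (alpha : Z -> R) :=
  RtoC (alpha 0%Z) = f 1 /\
  forall h : Z, h <> 0%Z ->
    RtoC (alpha h) = (f 1 + RtoC 2 * Ci * RtoC PI * RtoC (IZR h) * fhat f h)%C.

Lemma rels_real f alpha : contf f -> inF0 f -> rels f alpha ->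
  alpha 0%Z = Re (f 1) /\
  forall m, (1 <= m)%nat ->
    ap alpha m = Re (f 1) - 2*PI*INR m * (Acoef (vf f) m - Bcoef (uf f) m) /\
    an alpha m = Re (f 1) + 2*PI*INR m * (Acoef (vf f) m + Bcoef (uf f) m).
Proof.
  intros Hc HF [R0 Rh]. split.
  - apply RtoC_eq in R0. tauto.
  - intros m Hm. destruct (PQ_vals f m Hc) as [_ [_ [Q1 Q2]]].
    assert (H1 := Rh (Z.of_nat m) ltac:(lia)). assert (H2 := Rh (- Z.of_nat m)%Z ltac:(lia)).
    rewrite rel_form in H1, H2 by auto. apply RtoC_eq in H1. apply RtoC_eq in H2.
    simpl in H1, H2. unfold ap, an. rewrite (proj1 H1), (proj1 H2), Q1, Q2, opp_IZR, INR_Z. split; ring.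
Qed.

Lemma sig_diff phi N t : sig phi N t - sig phi N 0 =
  ssum (fun m => wN N m * (2 * (Acoef phi m * (cos (2*PI*INR m*t) - 1) + Bcoef phi m * sin (2*PI*INR m*t)))) N.
Proof.
  unfold sig. match goal with |- (?a + ?x) - (?a + ?y) = _ => replace ((a + x) - (a + y)) with (x - y) by ring end.
  rewrite <- ssum_minus. apply ssum_ext. intros m _.
  rewrite Rmult_0_r, cos_0, sin_0. unfold wN. ring.
Qed.

Lemma cpt_tmul c x : continuity_pt (fun t => t * c) x.
Proof. apply continuity_pt_filterlim. apply (exd_cont (fun t => t * c)). auto_derive; auto. Qed.

Theorem main_exp f alpha : contf f -> inF0 f -> rels f alpha -> expansion f alpha.
Proof.
  intros Hc HF HR.
  destruct (rels_real f alpha Hc HF HR) as [R0 Rm].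
  destruct (F0_vals f HF) as [Hu0 [Hv0 Hv1]].
  pose proof Hc as [Hu Hv].
  set (u1 := Re (f 1)) in *.
  set (phu := fun t => uf f t - t * u1).
  set (phv := vf f).
  assert (Cu : forall x, continuity_pt phu x).
  { intros x. apply (continuity_pt_minus (uf f) (fun t => t * u1)); auto. apply cpt_tmul. }
  assert (Cv : forall x, continuity_pt phv x) by exact Hv.
  assert (Au : forall m, (1 <= m)%nat -> Acoef phu m = 0).
  { intros m Hm. apply is_RInt_uniqR.
    eapply is_RInt_val; [eapply is_RInt_extR; [| exact (is_RInt_minusR _ _ _ _ _ _ (RInt_cos_correct _ Hu m)
                     (is_RInt_scalR _ _ _ u1 _ (tcos_nat01 m Hm)))]|].
    - intros x. unfold phu. simpl. ring.
    - destruct (F0_AB f m Hc HF Hm) as [A _]. rewrite A. ring. }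
  assert (Bu : forall m, (1 <= m)%nat -> Bcoef phu m = Bcoef (uf f) m + u1 / (2*PI*INR m)).
  { intros m Hm. apply is_RInt_uniqR.
    eapply is_RInt_val; [eapply is_RInt_extR; [| exact (is_RInt_minusR _ _ _ _ _ _ (RInt_sin_correct _ Hu m)
                     (is_RInt_scalR _ _ _ u1 _ (tsin_nat01 m Hm)))]|].
    - intros x. unfold phu. simpl. ring.
    - unfold Rdiv. ring. }
  assert (Bv : forall m, (1 <= m)%nat -> Bcoef phv m = 0).
  { intros m Hm. destruct (F0_AB f m Hc HF Hm) as [_ B]. exact B. }
  assert (ERe : forall N t, Re (fejer alpha N t) = alpha 0%Z * t + (sig phu N t - sig phu N 0)).
  { intros N t. rewrite fejer_eq. simpl. rewrite sig_diff. f_equal. apply ssum_ext. intros m Hm.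
    destruct (Rm m ltac:(lia)) as [E1 E2]. rewrite E1, E2, Au, Bu by lia.
    assert (INR m <> 0) by (apply not_0_INR; lia). assert (Hp := pi_ne0).
    field. auto. }
  assert (EIm : forall N t, Im (fejer alpha N t) = sig phv N t - sig phv N 0).
  { intros N t. rewrite fejer_eq. simpl. rewrite sig_diff. apply ssum_ext. intros m Hm.
    destruct (Rm m ltac:(lia)) as [E1 E2]. rewrite E1, E2, Bv by lia.
    assert (INR m <> 0) by (apply not_0_INR; lia). assert (Hp := pi_ne0).
    unfold phv. field. auto. }
  intros eps Heps.
  assert (He4 : 0 < eps / 4) by lra.
  assert (Hu01 : phu 0 = phu 1) by (unfold phu, uf; fold u1; rewrite Hu0; ring).
  assert (Hv01 : phv 0 = phv 1) by (unfold phv, vf; rewrite Hv0, Hv1; auto).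
  destruct (fejer_real phu Cu Hu01 _ He4) as [N1 HN1].
  destruct (fejer_real phv Cv Hv01 _ He4) as [N2 HN2].
  exists (Nat.max N1 N2). intros N HN t Ht. unfold I01 in Ht.
  eapply Rle_lt_trans; [apply Cmod_le_sum|].
  assert (Ere : Re (f t - fejer alpha N t)%C = (phu t - sig phu N t) - (phu 0 - sig phu N 0)).
  { change (Re (f t - fejer alpha N t)%C) with (Re (f t) - Re (fejer alpha N t)). rewrite ERe, R0. unfold phu, uf. fold u1. rewrite Hu0. ring. }
  assert (Eim : Im (f t - fejer alpha N t)%C = (phv t - sig phv N t) - (phv 0 - sig phv N 0)).
  { change (Im (f t - fejer alpha N t)%C) with (Im (f t) - Im (fejer alpha N t)). rewrite EIm. unfold phv, vf. rewrite Hv0. ring. }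
  rewrite Ere, Eim.
  assert (A1 := HN1 N ltac:(lia) t Ht). assert (A2 := HN1 N ltac:(lia) 0 ltac:(lra)).
  assert (A3 := HN2 N ltac:(lia) t Ht). assert (A4 := HN2 N ltac:(lia) 0 ltac:(lra)).
  assert (T1 := Rabs_triang (phu t - sig phu N t) (- (phu 0 - sig phu N 0))).
  assert (T2 := Rabs_triang (phv t - sig phv N t) (- (phv 0 - sig phv N 0))).
  rewrite Rabs_Ropp in T1, T2.
  replace (phu t - sig phu N t + - (phu 0 - sig phu N 0)) with ((phu t - sig phu N t) - (phu 0 - sig phu N 0)) in T1 by ring.
  replace (phv t - sig phv N t + - (phv 0 - sig phv N 0)) with ((phv t - sig phv N t) - (phv 0 - sig phv N 0)) in T2 by ring.
  lra.
Qed.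


Lemma small_zero x : (forall eps, 0 < eps -> Rabs x < eps) -> x = 0.
Proof.
  intros H. destruct (Req_dec x 0) as [E|E]; auto. exfalso.
  assert (Hp : 0 < Rabs x) by (apply Rabs_pos_lt; auto).
  specialize (H (Rabs x) Hp). lra.
Qed.

Lemma abs3 a b c : Rabs (a + b - c) <= Rabs a + Rabs b + Rabs c.
Proof.
  pose proof (Rabs_triang (a + b) (- c)). pose proof (Rabs_triang a b). rewrite Rabs_Ropp in H.
  replace (a + b + - c) with (a + b - c) in H by ring. lra.
Qed.
Lemma abs3' a b c : Rabs (a - b - c) <= Rabs a + Rabs b + Rabs c.
Proof.
  pose proof (abs3 a (- b) c). rewrite Rabs_Ropp in H. replace (a + - b - c) with (a - b - c) in H by ring. lra.
Qed.

Lemma exp_comp f alpha : expansion f alpha -> forall eps, 0 < eps -> exists N0, forall N, (N0 <= N)%nat ->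
  forall t, I01 t -> Rabs (Re (f t) - Re (fejer alpha N t)) < eps /\ Rabs (Im (f t) - Im (fejer alpha N t)) < eps.
Proof.
  intros H eps Heps. destruct (H eps Heps) as [N0 HN]. exists N0. intros N HN' t Ht.
  specialize (HN N HN' t Ht). split.
  - eapply Rle_lt_trans; [|exact HN]. apply (re_le_Cmod (f t - fejer alpha N t)%C).
  - eapply Rle_lt_trans; [|exact HN]. apply (im_le_Cmod (f t - fejer alpha N t)%C).
Qed.

Lemma fejer_sym alpha N t :
  Re (fejer alpha N t) + Re (fejer alpha N (1 - t)) = alpha 0%Z /\
  Im (fejer alpha N t) - Im (fejer alpha N (1 - t)) = 0.
Proof.
  rewrite !fejer_eq. simpl. split.
  - replace (alpha 0%Z * t + ssum (fun m => wN N m * ((ap alpha m + an alpha m) * sin (2 * PI * INR m * t) / (2 * PI * INR m))) N +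
      (alpha 0%Z * (1 - t) + ssum (fun m => wN N m * ((ap alpha m + an alpha m) * sin (2 * PI * INR m * (1 - t)) / (2 * PI * INR m))) N))
     with (alpha 0%Z + (ssum (fun m => wN N m * ((ap alpha m + an alpha m) * sin (2 * PI * INR m * t) / (2 * PI * INR m))) N +
      ssum (fun m => wN N m * ((ap alpha m + an alpha m) * sin (2 * PI * INR m * (1 - t)) / (2 * PI * INR m))) N)) by ring.
    rewrite <- ssum_plus. rewrite (ssum_ext _ (fun _ => 0)). { rewrite ssum_zero. ring. }
    intros m _. replace (2 * PI * INR m * (1 - t)) with (2*PI*IZR (Z.of_nat m) - 2*PI*INR m*t) by (rewrite INR_Z; ring).
    rewrite sin_refZ. unfold Rdiv. ring.
  - rewrite <- ssum_minus. rewrite (ssum_ext _ (fun _ => 0)). { rewrite ssum_zero. ring. }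
    intros m _. replace (2 * PI * INR m * (1 - t)) with (2*PI*IZR (Z.of_nat m) - 2*PI*INR m*t) by (rewrite INR_Z; ring).
    rewrite cos_refZ. unfold Rdiv. ring.
Qed.

Lemma fejer_one alpha N : Re (fejer alpha N 1) = alpha 0%Z /\ Im (fejer alpha N 1) = 0.
Proof.
  rewrite fejer_eq. simpl. split.
  - rewrite (ssum_ext _ (fun _ => 0)). { rewrite ssum_zero. ring. }
    intros m _. rewrite Rmult_1_r. destruct (cs_nat m) as [_ B]. rewrite B. unfold Rdiv. ring.
  - rewrite (ssum_ext _ (fun _ => 0)). { rewrite ssum_zero. ring. }
    intros m _. rewrite Rmult_1_r. destruct (cs_nat m) as [A _]. rewrite A. unfold Rdiv. ring.
Qed.

Theorem main_F0 f alpha : expansion f alpha -> inF0 f.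
Proof.
  intros H t Ht. unfold I01 in Ht.
  assert (Ht' : I01 (1 - t)) by (unfold I01; lra).
  assert (H1 : I01 1) by (unfold I01; lra).
  apply Cpair_eq.
  - change (Re (f t) + Re (f (1 - t)) = Re (f 1)).
    replace (Re (f t) + Re (f (1 - t))) with (Re (f 1) + (Re (f t) + Re (f (1 - t)) - Re (f 1))) by ring.
    replace (Re (f t) + Re (f (1 - t)) - Re (f 1)) with 0. { ring. }
    symmetry. apply small_zero. intros eps Heps.
    destruct (exp_comp f alpha H (eps/3) ltac:(lra)) as [N0 HN].
    destruct (HN N0 (le_n _) t Ht) as [A1 _]. destruct (HN N0 (le_n _) (1 - t) Ht') as [A2 _].
    destruct (HN N0 (le_n _) 1 H1) as [A3 _].
    destruct (fejer_sym alpha N0 t) as [S _]. destruct (fejer_one alpha N0) as [O _].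
    rewrite O in A3.
    replace (Re (f t) + Re (f (1 - t)) - Re (f 1)) with
      ((Re (f t) - Re (fejer alpha N0 t)) + (Re (f (1 - t)) - Re (fejer alpha N0 (1 - t))) - (Re (f 1) - alpha 0%Z)) by lra.
    eapply Rle_lt_trans; [apply abs3|]. lra.
  - change (Im (f t) + - Im (f (1 - t)) = Im (f 1)).
    replace (Im (f t) + - Im (f (1 - t))) with (Im (f 1) + (Im (f t) - Im (f (1 - t)) - Im (f 1))) by ring.
    replace (Im (f t) - Im (f (1 - t)) - Im (f 1)) with 0. { ring. }
    symmetry. apply small_zero. intros eps Heps.
    destruct (exp_comp f alpha H (eps/3) ltac:(lra)) as [N0 HN].
    destruct (HN N0 (le_n _) t Ht) as [_ A1]. destruct (HN N0 (le_n _) (1 - t) Ht') as [_ A2].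
    destruct (HN N0 (le_n _) 1 H1) as [_ A3].
    destruct (fejer_sym alpha N0 t) as [_ S]. destruct (fejer_one alpha N0) as [_ O].
    rewrite O in A3.
    replace (Im (f t) - Im (f (1 - t)) - Im (f 1)) with
      ((Im (f t) - Im (fejer alpha N0 t)) - (Im (f (1 - t)) - Im (fejer alpha N0 (1 - t))) - (Im (f 1) - 0)) by lra.
    eapply Rle_lt_trans; [apply abs3'|]. lra.
Qed.


Lemma orth_ss j m : (1 <= j)%nat -> (1 <= m)%nat ->
  is_RInt (fun t => sin (2*PI*INR j*t) * sin (2*PI*INR m*t)) 0 1 (if Nat.eqb j m then 1/2 else 0).
Proof.
  intros Hj Hm.
  assert (H1 := int01_cosZ (Z.of_nat j - Z.of_nat m)).
  assert (H2 := int01_cosZ (Z.of_nat j + Z.of_nat m)).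
  destruct (Z.eqb_spec (Z.of_nat j + Z.of_nat m) 0); [lia|].
  assert (H := is_RInt_scalR _ _ _ (1/2) _ (is_RInt_minusR _ _ _ _ _ _ H1 H2)).
  eapply is_RInt_val; [eapply is_RInt_extR; [|exact H]|].
  - intros t. rewrite minus_IZR, plus_IZR, !INR_Z.
    replace (2 * PI * (INR j - INR m) * t) with (2*PI*INR j*t - 2*PI*INR m*t) by ring.
    replace (2 * PI * (INR j + INR m) * t) with (2*PI*INR j*t + 2*PI*INR m*t) by ring.
    rewrite cos_minus, cos_plus. field.
  - destruct (Nat.eqb_spec j m); destruct (Z.eqb_spec (Z.of_nat j - Z.of_nat m) 0); try lia; field.
Qed.

Lemma orth_cc j m : (1 <= j)%nat -> (1 <= m)%nat ->
  is_RInt (fun t => (1 - cos (2*PI*INR j*t)) * cos (2*PI*INR m*t)) 0 1 (if Nat.eqb j m then - (1/2) else 0).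
Proof.
  intros Hj Hm.
  assert (H1 := int01_cosZ (Z.of_nat j - Z.of_nat m)).
  assert (H2 := int01_cosZ (Z.of_nat j + Z.of_nat m)).
  assert (H0 := cos_nat01 m Hm).
  destruct (Z.eqb_spec (Z.of_nat j + Z.of_nat m) 0); [lia|].
  assert (H := is_RInt_minusR _ _ _ _ _ _ H0 (is_RInt_scalR _ _ _ (1/2) _ (is_RInt_plusR _ _ _ _ _ _ H1 H2))).
  eapply is_RInt_val; [eapply is_RInt_extR; [|exact H]|].
  - intros t. rewrite minus_IZR, plus_IZR, !INR_Z.
    replace (2 * PI * (INR j - INR m) * t) with (2*PI*INR j*t - 2*PI*INR m*t) by ring.
    replace (2 * PI * (INR j + INR m) * t) with (2*PI*INR j*t + 2*PI*INR m*t) by ring.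
    rewrite cos_minus, cos_plus. field.
  - destruct (Nat.eqb_spec j m); destruct (Z.eqb_spec (Z.of_nat j - Z.of_nat m) 0); try lia; field.
Qed.

Lemma lim_w X c d m : (forall eps, 0 < eps -> exists N0, forall N, (N0 <= N)%nat ->
    Rabs (X - (c + wN N m * d)) <= eps) -> X = c + d.
Proof.
  intros H. apply Rminus_diag_uniq. apply small_zero. intros eps Heps.
  destruct (H (eps/2) ltac:(lra)) as [N0 HN].
  destruct (INR_unbounded (2 * INR m * Rabs d / eps)) as [N1 HN1].
  set (N := Nat.max N0 (S N1)).
  assert (HNpos : 0 < INR N) by (apply lt_0_INR; unfold N; lia).
  assert (HN1' : INR N1 < INR N) by (apply lt_INR; unfold N; lia).
  specialize (HN N ltac:(unfold N; lia)).
  unfold wN in HN.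
  replace (X - (c + (1 - INR m / INR N) * d)) with ((X - (c + d)) + INR m / INR N * d) in HN by ring.
  assert (Hb : Rabs (INR m / INR N * d) < eps / 2).
  { rewrite Rabs_mult. unfold Rdiv. rewrite Rabs_mult.
    rewrite (Rabs_pos_eq (INR m)) by apply pos_INR.
    rewrite (Rabs_pos_eq (/ INR N)) by (left; apply Rinv_0_lt_compat; auto).
    assert (E : 2 * INR m * Rabs d = (2 * INR m * Rabs d / eps) * eps) by (field; lra).
    assert (2 * INR m * Rabs d < INR N * eps).
    { rewrite E. apply Rmult_lt_compat_r; lra. }
    apply (Rmult_lt_reg_r (2 * INR N)); [lra|].
    replace (INR m * / INR N * Rabs d * (2 * INR N)) with (2 * INR m * Rabs d) by (field; lra).
    lra. }
  pose proof (Rabs_triang (X - (c + d) + INR m / INR N * d) (- (INR m / INR N * d))).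
  rewrite Rabs_Ropp in H0. replace (X - (c + d) + INR m / INR N * d + - (INR m / INR N * d)) with (X - (c + d)) in H0 by ring.
  lra.
Qed.

Lemma approx_coef (phi psi : R -> R) (Fn : nat -> R -> R) X (I : nat -> R) m0 :
  is_RInt (fun t => phi t * psi t) 0 1 X ->
  (forall t, Rabs (psi t) <= 1) ->
  (forall eps, 0 < eps -> exists N0, forall N, (N0 <= N)%nat -> forall t, I01 t -> Rabs (phi t - Fn N t) < eps) ->
  (forall N, (m0 <= N)%nat -> is_RInt (fun t => Fn N t * psi t) 0 1 (I N)) ->
  forall eps, 0 < eps -> exists N0, forall N, (N0 <= N)%nat -> Rabs (X - I N) <= eps.
Proof.
  intros HX Hpsi Hconv HI eps Heps.
  destruct (Hconv eps Heps) as [N0 HN0]. exists (Nat.max N0 m0). intros N HN.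
  assert (D := is_RInt_minusR _ _ _ _ _ _ HX (HI N ltac:(lia))).
  assert (B := RInt_abs_le _ 0 1 _ eps ltac:(lra) D). rewrite Rminus_0_r, Rmult_1_l in B. apply B.
  intros x Hx. replace (phi x * psi x - Fn N x * psi x) with ((phi x - Fn N x) * psi x) by ring.
  rewrite Rabs_mult. specialize (HN0 N ltac:(lia) x Hx). specialize (Hpsi x).
  assert (0 <= Rabs (psi x)) by apply Rabs_pos. assert (0 <= Rabs (phi x - Fn N x)) by apply Rabs_pos. nra.
Qed.

Theorem main_uniq f alpha : contf f -> inF0 f -> expansion f alpha -> rels f alpha.
Proof.
  intros Hc HF HE.
  pose proof Hc as [Hu Hv].
  destruct (F0_vals f HF) as [Hu0 [Hv0 Hv1]].
  assert (Hconv := exp_comp f alpha HE).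
  assert (R0 : alpha 0%Z = Re (f 1)).
  { symmetry. apply Rminus_diag_uniq. apply small_zero. intros eps Heps.
    destruct (Hconv eps Heps) as [N0 HN]. destruct (HN N0 (le_n _) 1 ltac:(unfold I01; lra)) as [A _].
    rewrite (proj1 (fejer_one alpha N0)) in A. exact A. }
  assert (Hre : forall eps, 0 < eps -> exists N0, forall N, (N0 <= N)%nat -> forall t, I01 t ->
     Rabs (uf f t - Re (fejer alpha N t)) < eps).
  { intros eps Heps. destruct (Hconv eps Heps) as [N0 HN]. exists N0. intros N HN' t Ht. apply (HN N HN' t Ht). }
  assert (Him : forall eps, 0 < eps -> exists N0, forall N, (N0 <= N)%nat -> forall t, I01 t ->
     Rabs (vf f t - Im (fejer alpha N t)) < eps).
  { intros eps Heps. destruct (Hconv eps Heps) as [N0 HN]. exists N0. intros N HN' t Ht. apply (HN N HN' t Ht). }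
  assert (KB : forall m, (1 <= m)%nat -> Bcoef (uf f) m =
      alpha 0%Z * (- / (2*PI*INR m)) + ((ap alpha m + an alpha m) / (2*PI*INR m)) / 2).
  { intros m Hm.
    apply (lim_w _ _ _ m). eapply (approx_coef (uf f) (fun t => sin (2*PI*INR m*t)) (fun N t => Re (fejer alpha N t)) _ _ m).
    - apply RInt_sin_correct; auto.
    - intros t. apply Rabs_le. apply SIN_bound.
    - exact Hre.
    - intros N HN.
      set (coef := fun j => wN N j * ((ap alpha j + an alpha j) / (2 * PI * INR j))).
      assert (HS := is_RInt_ssum (fun j t => coef j * (sin (2*PI*INR j*t) * sin (2*PI*INR m*t)))
                      (fun j => coef j * (if Nat.eqb j m then 1/2 else 0)) 0 1 N
                      (fun j Hj => is_RInt_scalR _ _ _ (coef j) _ (orth_ss j m ltac:(lia) Hm))).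
      assert (HT := is_RInt_scalR _ _ _ (alpha 0%Z) _ (tsin_nat01 m Hm)).
      eapply is_RInt_val; [eapply is_RInt_extR; [|exact (is_RInt_plusR _ _ _ _ _ _ HT HS)]|].
      + intros t. rewrite fejer_eq. simpl. rewrite Rmult_plus_distr_r. f_equal; [ring|].
        symmetry. rewrite Rmult_comm, <- ssum_scal. apply ssum_ext. intros j _. unfold coef. unfold Rdiv. ring.
      + rewrite (ssum_ext _ (fun j => if Nat.eqb j m then coef j * (1/2) else 0)).
        * rewrite ssum_delta by auto. destruct (Nat.leb_spec m N); [|lia]. unfold coef, Rdiv. ring.
        * intros j _. destruct (Nat.eqb j m); ring. }
  assert (KA : forall m, (1 <= m)%nat -> Acoef (vf f) m =
      0 + - ((ap alpha m - an alpha m) / (2*PI*INR m)) / 2).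
  { intros m Hm.
    apply (lim_w _ _ _ m). eapply (approx_coef (vf f) (fun t => cos (2*PI*INR m*t)) (fun N t => Im (fejer alpha N t)) _ _ m).
    - apply RInt_cos_correct; auto.
    - intros t. apply Rabs_le. apply COS_bound.
    - exact Him.
    - intros N HN.
      set (coef := fun j => wN N j * ((ap alpha j - an alpha j) / (2 * PI * INR j))).
      assert (HS := is_RInt_ssum (fun j t => coef j * ((1 - cos (2*PI*INR j*t)) * cos (2*PI*INR m*t)))
                      (fun j => coef j * (if Nat.eqb j m then - (1/2) else 0)) 0 1 N
                      (fun j Hj => is_RInt_scalR _ _ _ (coef j) _ (orth_cc j m ltac:(lia) Hm))).
      eapply is_RInt_val; [eapply is_RInt_extR; [|exact HS]|].
      + intros t. rewrite fejer_eq. simpl.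
        symmetry. rewrite Rmult_comm, <- ssum_scal. apply ssum_ext. intros j _. unfold coef. unfold Rdiv. ring.
      + rewrite (ssum_ext _ (fun j => if Nat.eqb j m then coef j * (- (1/2)) else 0)).
        * rewrite ssum_delta by auto. destruct (Nat.leb_spec m N); [|lia]. unfold coef, Rdiv. ring.
        * intros j _. destruct (Nat.eqb j m); ring. }
  split.
  - apply RtoC_eq. split; [exact R0|]. rewrite Hv1. auto.
  - intros h Hh. rewrite rel_form by auto. apply RtoC_eq. simpl. split.
    + destruct (Z_cases h Hh) as [m [Hm [E|E]]]; subst;
      destruct (PQ_vals f m Hc) as [_ [_ [Q1 Q2]]]; rewrite ?Q1, ?Q2, ?opp_IZR, INR_Z, KA, KB by auto;
      rewrite <- R0; assert (INR m <> 0) by (apply not_0_INR; lia); assert (Hp := pi_ne0);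
      unfold ap, an; field; auto.
    + rewrite Hv1, (F0_P f h Hc HF Hh). ring.
Qed.


Definition inS' (f : R -> C) : Prop :=
  f 0 = RtoC 0 /\ Im (f 1) = 0 /\ -2 <= Re (f 1) <= 2 /\
  forall h : Z, h <> 0%Z ->
    let g := fun t : R => (f t - RtoC t * f 1)%C in
    Re (fhat g h) = 0 /\ Cmod (fhat g h) <= 1 / (PI * Rabs (IZR h)).

Lemma fhat_g f alpha h : contf f -> inF0 f -> rels f alpha -> h <> 0%Z ->
  fhat (fun t => (f t - RtoC t * f 1)%C) h = (0, - alpha h / (2*PI*IZR h)).
Proof.
  intros Hc HF HR Hh.
  destruct (F0_vals f HF) as [_ [_ Hv1]].
  assert (HPc := F0_P f h Hc HF Hh).
  assert (Ha : alpha h = Re (f 1) - 2*PI*IZR h * Qc f h).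
  { destruct HR as [_ HR]. specialize (HR h Hh). rewrite rel_form in HR by auto.
    apply RtoC_eq in HR. simpl in HR. tauto. }
  assert (Hcz := cZ_neq0 h Hh).
  apply fhat_pair.
  - assert (H := is_RInt_minusR _ _ _ _ _ _ (is_RInt_minusR _ _ _ _ _ _ (Pc_correct f h Hc)
                   (is_RInt_scalR _ _ _ (Re (f 1)) _ (int01_tcosZ h Hh)))
                   (is_RInt_scalR _ _ _ (Im (f 1)) _ (int01_tsinZ h Hh))).
    eapply is_RInt_val; [eapply is_RInt_extR; [|exact H]|].
    + intros t. unfold Cminus, Cplus, Copp, Cmult, RtoC, Re, Im. simpl. ring.
    + rewrite HPc, Hv1. ring.
  - assert (H := is_RInt_plusR _ _ _ _ _ _ (is_RInt_minusR _ _ _ _ _ _ (Qc_correct f h Hc)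
                   (is_RInt_scalR _ _ _ (Im (f 1)) _ (int01_tcosZ h Hh)))
                   (is_RInt_scalR _ _ _ (Re (f 1)) _ (int01_tsinZ h Hh))).
    eapply is_RInt_val; [eapply is_RInt_extR; [|exact H]|].
    + intros t. unfold Cminus, Cplus, Copp, Cmult, RtoC, Re, Im. simpl. ring.
    + rewrite Hv1, Ha. field. split; [apply IZR_ne0; auto | apply pi_ne0].
Qed.

Lemma Cmod_0y y : Cmod (0, y) = Rabs y.
Proof. unfold Cmod. simpl. rewrite <- sqrt_Rsqr_abs. f_equal. unfold Rsqr. ring. Qed.

Lemma bound_iff a x : x <> 0 -> (Rabs (- a / (2 * PI * x)) <= 1 / (PI * Rabs x) <-> Rabs a <= 2).
Proof.
  intros Hx. assert (Hp := PI_RGT_0). assert (HH : 0 < Rabs x) by (apply Rabs_pos_lt; auto).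
  assert (E : Rabs (- a / (2 * PI * x)) = Rabs a / 2 * (1 / (PI * Rabs x))).
  { unfold Rdiv. rewrite Rabs_mult, Rabs_Ropp, Rabs_inv, !Rabs_mult, (Rabs_pos_eq 2), (Rabs_pos_eq PI) by lra.
    field. lra. }
  rewrite E. assert (Hq : 0 < 1 / (PI * Rabs x)) by (unfold Rdiv; rewrite Rmult_1_l; apply Rinv_0_lt_compat; nra).
  split; intros Hb.
  - assert (Rabs a / 2 <= 1).
    { apply (Rmult_le_reg_r (1 / (PI * Rabs x))); auto. lra. }
    lra.
  - replace (1 / (PI * Rabs x)) with (1 * (1 / (PI * Rabs x))) at 2 by ring.
    apply Rmult_le_compat_r; lra.
Qed.

Theorem main_S f alpha : contf f -> inF0 f -> rels f alpha ->
  (inS' f <-> forall h : Z, Rabs (alpha h) <= 2).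
Proof.
  intros Hc HF HR.
  destruct (F0_vals f HF) as [Hu0 [Hv0 Hv1]].
  assert (R0 : alpha 0%Z = Re (f 1)) by (destruct HR as [R0 _]; apply RtoC_eq in R0; tauto).
  split.
  - intros [_ [_ [B Hh]]] h.
    destruct (Z.eq_dec h 0) as [E|E].
    + subst. rewrite R0. apply Rabs_le. lra.
    + specialize (Hh h E). cbv zeta in Hh. rewrite (fhat_g f alpha h Hc HF HR E) in Hh.
      destruct Hh as [_ Hh]. rewrite Cmod_0y in Hh.
      apply (bound_iff (alpha h) (IZR h)); auto. apply IZR_ne0; auto.
  - intros Hb. split; [|split; [|split]].
    + apply Cpair_eq; simpl; auto.
    + auto.
    + specialize (Hb 0%Z). rewrite R0 in Hb. apply Rabs_le_between in Hb. auto.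
    + intros h Hh. cbv zeta. rewrite (fhat_g f alpha h Hc HF HR Hh). split; [reflexivity|].
      rewrite Cmod_0y. apply bound_iff; auto. apply IZR_ne0; auto.
Qed.

Theorem exists_alpha f : contf f -> inF0 f -> exists alpha, rels f alpha.
Proof.
  intros Hc HF. destruct (F0_vals f HF) as [_ [_ Hv1]].
  exists (fun h => if Z.eqb h 0 then Re (f 1) else Re (f 1) - 2*PI*IZR h * Qc f h).
  split.
  - apply RtoC_eq. simpl. auto.
  - intros h Hh. rewrite rel_form by auto. apply RtoC_eq. simpl.
    destruct (Z.eqb_spec h 0); [lia|]. split; auto.
    rewrite Hv1, (F0_P f h Hc HF Hh). ring.
Qed.


Definition clamp (t : R) := Rmax 0 (Rmin 1 t).

Lemma clamp_I01 t : I01 (clamp t).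
Proof. unfold I01, clamp, Rmax, Rmin. repeat destruct Rle_dec; lra. Qed.
Lemma clamp_id t : I01 t -> clamp t = t.
Proof. unfold I01, clamp, Rmax, Rmin. intros. repeat destruct Rle_dec; lra. Qed.
Lemma clamp_lip a b : Rabs (clamp a - clamp b) <= Rabs (a - b).
Proof. unfold clamp, Rmax, Rmin. repeat destruct Rle_dec; unfold Rabs; repeat destruct Rcase_abs; lra. Qed.

Lemma ball_R (x y : R) (eps : R) : ball x eps y <-> Rabs (y - x) < eps.
Proof. unfold ball; simpl. unfold AbsRing_ball, abs, minus, plus, opp; simpl. tauto. Qed.

Lemma clamp_lim x : filterlim clamp (locally x) (within I01 (locally (clamp x))).
Proof.
  intros P [eps Heps]. exists eps. intros y Hy. apply Heps.
  - apply ball_R. apply ball_R in Hy. eapply Rle_lt_trans; [apply clamp_lip|]. auto.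
  - apply clamp_I01.
Qed.

Lemma cont_Re (z : C) : filterlim Re (locally z) (locally (Re z)).
Proof. destruct z. apply (continuous_fst (U := R_UniformSpace) (V := R_UniformSpace)). Qed.
Lemma cont_Im (z : C) : filterlim Im (locally z) (locally (Im z)).
Proof. destruct z. apply (continuous_snd (U := R_UniformSpace) (V := R_UniformSpace)). Qed.

Lemma contf_clamp f : cont01 f -> contf (fun t => f (clamp t)).
Proof.
  intros Hf. split; intros x; apply continuity_pt_filterlim; unfold uf, vf.
  - apply (filterlim_comp _ _ _ (fun t => f (clamp t)) Re _ (locally (f (clamp x)))); [|apply cont_Re].
    apply (filterlim_comp _ _ _ clamp f _ (within I01 (locally (clamp x)))); [apply clamp_lim|].
    apply Hf, clamp_I01.
  - apply (filterlim_comp _ _ _ (fun t => f (clamp t)) Im _ (locally (f (clamp x)))); [|apply cont_Im].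
    apply (filterlim_comp _ _ _ clamp f _ (within I01 (locally (clamp x)))); [apply clamp_lim|].
    apply Hf, clamp_I01.
Qed.

Definition agree (f F : R -> C) := forall t, I01 t -> f t = F t.

Lemma agree_F0 f F : agree f F -> (inF0 f <-> inF0 F).
Proof.
  intros Ha. assert (H1 : I01 1) by (unfold I01; lra).
  split; intros H t Ht; assert (Ht' : I01 (1 - t)) by (unfold I01 in *; lra);
  specialize (H t Ht); rewrite ?(Ha t Ht), ?(Ha _ Ht'), ?(Ha 1 H1) in *; auto.
Qed.

Lemma agree_exp f F alpha : agree f F -> (expansion f alpha <-> expansion F alpha).
Proof.
  intros Ha. split; intros H eps Heps; destruct (H eps Heps) as [N0 HN]; exists N0;
  intros N HN' t Ht; specialize (HN N HN' t Ht); rewrite ?(Ha t Ht) in *; auto.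
Qed.

Lemma agree_fhat f F h : agree f F -> fhat f h = fhat F h.
Proof.
  intros Ha. unfold fhat. apply (RInt_ext (V := C_R_CompleteNormedModule)). intros x Hx.
  rewrite Rmin_left, Rmax_right in Hx by lra. rewrite Ha; auto. unfold I01; lra.
Qed.

Lemma agree_g f F : agree f F -> agree (fun t => (f t - RtoC t * f 1)%C) (fun t => (F t - RtoC t * F 1)%C).
Proof. intros Ha t Ht. simpl. rewrite (Ha t Ht), (Ha 1); auto. unfold I01; lra. Qed.

Lemma agree_rels f F alpha : agree f F -> (rels f alpha <-> rels F alpha).
Proof.
  intros Ha. assert (H1 : I01 1) by (unfold I01; lra).
  unfold rels. rewrite (Ha 1 H1).
  split; intros [A B]; split; auto; intros h Hh; rewrite (B h Hh), (agree_fhat f F h Ha); auto.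
Qed.

Lemma agree_S f F : agree f F -> (inS' f <-> inS' F).
Proof.
  intros Ha. assert (H1 : I01 1) by (unfold I01; lra). assert (H0 : I01 0) by (unfold I01; lra).
  unfold inS'. rewrite (Ha 1 H1), (Ha 0 H0).
  assert (E : forall h, fhat (fun t => (f t - RtoC t * F 1)%C) h = fhat (fun t => (F t - RtoC t * F 1)%C) h).
  { intros h. apply agree_fhat. intros t Ht. rewrite (Ha t Ht). auto. }
  split; intros [A [B [C D]]]; (split; [exact A|split; [exact B|split; [exact C|]]]);
  intros h Hh; specialize (D h Hh); cbv zeta in *; rewrite ?E in *; exact D.
Qed.

Theorem lemma3p1 (f : R -> C) (Hf : cont01 f) :
  (inF0 f <-> exists alpha : Z -> R, expansion f alpha) /\
  (inF0 f -> forall alpha : Z -> R,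
     expansion f alpha <->
     (RtoC (alpha 0%Z) = f 1 /\
      forall h : Z, h <> 0%Z ->
        RtoC (alpha h) = (f 1 + RtoC 2 * Ci * RtoC PI * RtoC (IZR h) * fhat f h)%C)) /\
  (inF0 f -> forall alpha : Z -> R,
     RtoC (alpha 0%Z) = f 1 ->
     (forall h : Z, h <> 0%Z ->
        RtoC (alpha h) = (f 1 + RtoC 2 * Ci * RtoC PI * RtoC (IZR h) * fhat f h)%C) ->
     (inS f <-> forall h : Z, Rabs (alpha h) <= 2)).
Proof.
  set (F := fun t => f (clamp t)).
  assert (Ha : agree f F) by (intros t Ht; unfold F; rewrite clamp_id; auto).
  assert (Hc : contf F) by (apply contf_clamp; auto).
  split; [|split].
  - split.
    + intros HF. apply (agree_F0 f F Ha) in HF.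
      destruct (exists_alpha F Hc HF) as [alpha HR]. exists alpha.
      apply (agree_exp f F alpha Ha). apply main_exp; auto.
    + intros [alpha HE]. apply (agree_exp f F alpha Ha) in HE. apply (agree_F0 f F Ha).
      apply (main_F0 F alpha HE).
  - intros HF alpha. apply (agree_F0 f F Ha) in HF.
    change (expansion f alpha <-> rels f alpha).
    rewrite (agree_exp f F alpha Ha), (agree_rels f F alpha Ha).
    split; [apply main_uniq | apply main_exp]; auto.
  - intros HF alpha H0 Hh. apply (agree_F0 f F Ha) in HF.
    assert (HR : rels F alpha) by (apply (agree_rels f F alpha Ha); split; auto).
    change (cont01 f /\ inS' f <-> forall h : Z, Rabs (alpha h) <= 2).
    rewrite (agree_S f F Ha), <- (main_S F alpha Hc HF HR). tauto.
Qed.
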